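(* Let $R$ be a $*$-ring with unity having generalized comparability for elements, and let $e$ be a projection of $R$. Then the $*$-ring $eRe$ (with unity $e$ and the restricted involution) has generalized comparability for elements.
   Context: Natural partial order: $a\leq b$ iff there is $x$ with $a=xa=xb=ax^*=bx^*$. Equivalence: $a\sim b$ iff there exist $x,y$ with $aa^*=xx^*$, $bb^*=yy^*$, $a^*a=y^*y$, $b^*b=x^*x$, $x=ax=xb$, $y=by=ya$. Dominance: $a\lesssim b$ iff $a\sim c\leq b$ for some $c$. A $*$-ring $S$ with unity $1_S$ has generalized comparability for elements if for all $a,b\in S$ there is a central projection $h$ of $S$ with $ha\lesssim hb$ and $(1_S-h)b\lesssim(1_S-h)a$ (all relations computed in $S$). Projection: $e=e^2=e^*$. *)

(* Defs.v *)
From HB Require Import structures.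
From mathcomp Require Import all_boot all_order all_algebra.
Set Implicit Arguments. Unset Strict Implicit. Unset Printing Implicit Defensive.
Import GRing.Theory.
Local Open Scope ring_scope.

Definition is_star (R : pzRingType) (st : R -> R) : Prop :=
  (forall x y : R, st (x + y) = st x + st y) /\
  (forall x y : R, st (x * y) = st y * st x) /\
  (forall x : R, st (st x) = x).

Section Rel.
Variables (R : pzRingType) (st : R -> R).
(* All relations are computed inside a sub-*-ring given by a carrier predicate
   S (closed under the operations) with unity u.  For R itself, S is the
   full predicate and u = 1; for the corner eRe, S z := exists r, z = e r e
   and u = e. *)
Variable S : R -> Prop.

Definition npo (a b : R) : Prop :=
  exists x, S x /\ a = x * a /\ a = x * b /\ a = a * st x /\ a = b * st x.

Definition sequiv (a b : R) : Prop :=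
  exists x y, S x /\ S y /\
    a * st a = x * st x /\ b * st b = y * st y /\
    st a * a = st y * y /\ st b * b = st x * x /\
    x = a * x /\ x = x * b /\ y = b * y /\ y = y * a.

Definition sdom (a b : R) : Prop := exists c, S c /\ sequiv a c /\ npo c b.

Definition is_projection (e : R) : Prop := e * e = e /\ st e = e.

Definition central_projection (h : R) : Prop :=
  S h /\ is_projection h /\ (forall s, S s -> h * s = s * h).

Definition gen_comparability (u : R) : Prop :=
  forall a b, S a -> S b ->
    exists h, central_projection h /\
      sdom (h * a) (h * b) /\ sdom ((u - h) * b) ((u - h) * a).
End Rel.

Definition fullR (R : pzRingType) : R -> Prop := fun _ => True.
Definition corner (R : pzRingType) (e : R) : R -> Prop :=
  fun z => exists r, z = e * r * e.

(* Main.v *)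
Require Import Defs.
From mathcomp Require Import all_boot all_order all_algebra.
Local Open Scope ring_scope.
Import GRing.Theory.

Lemma key (R : pzRingType) (st : R -> R) (e : R) (a b : R) :
  is_star st -> is_projection st e ->
  e*a = a -> a*e = a -> e*b = b -> b*e = b ->
  sdom st (@fullR R) a b -> sdom st (corner e) a b.
Proof.
move=> [Ha [Hm Hi]] [ee Hst] ea ae eb be.
case=> c [_ [[x [y [_ [_ [h1 [h2 [h3 [h4 [h5 [h6 [h7 h8]]]]]]]]]]] [z [_ [c1 [c2 [c3 c4]]]]]]].
have ec : e*c = c by rewrite [in LHS]c4 mulrA eb -c4.
have ce : c*e = c by rewrite [in LHS]c2 -mulrA be -c2.
have ex : e*x = x by rewrite [in LHS]h5 mulrA ea -h5.
have xe : x*e = x by rewrite [in LHS]h6 -mulrA ce -h6.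
have ey : e*y = y by rewrite [in LHS]h7 mulrA ec -h7.
have ye : y*e = y by rewrite [in LHS]h8 -mulrA ae -h8.
have sz : st (e*z*e) = e * st z * e by rewrite Hm Hm Hst mulrA.
exists c; split; first by exists c; rewrite ec ce.
split.
  exists x, y; split; first by exists x; rewrite ex xe.
  split; first by exists y; rewrite ey ye.
  by [].
exists (e*z*e); split; first by exists z.
rewrite sz; split; [|split; [|split]].
- apply/esym; by rewrite -mulrA ec -mulrA -c1 ec.
- apply/esym; by rewrite -mulrA eb -mulrA -c2 ec.
- apply/esym; by rewrite mulrA mulrA ce -c3 ce.
- apply/esym; by rewrite mulrA mulrA be -c4 ce.
Qed.

Theorem mainTheorem16 (R : pzRingType) (st : R -> R) (e : R) :
  is_star st ->
  gen_comparability st (@fullR R) 1 ->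
  is_projection st e ->
  gen_comparability st (corner e) e.
Proof.
move=> Hs Hg He a b [ra ->] [rb ->].
have Hs' := Hs; case: Hs' => [Ha [Hm Hi]].
have He' := He; case: He' => [ee Hst].
set a' := e*ra*e; set b' := e*rb*e.
have ea : e*a' = a'.
by rewrite /a' !mulrA ee.
have ae : a'*e = a' by rewrite /a' -!mulrA ee.
have eb : e*b' = b' by rewrite /b' !mulrA ee.
have be : b'*e = b' by rewrite /b' -!mulrA ee.
have [h [[_ [[hh hst] hc]] [d1 d2]]] := Hg a' b' I I.
have hc' s : h*s = s*h := hc s I.
have ehe : e*h*e = h*e by rewrite -mulrA (hc' e) mulrA ee.
exists (e*h*e); split.
  split; first by exists h.
  split.
    split; first by rewrite ehe -mulrA (mulrA e h e) -(hc' e) -mulrA ee mulrA hh.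
    by rewrite Hm Hm Hst hst mulrA.
  move=> s [r ->]; rewrite ehe.
  have es : e*(e*r*e) = e*r*e by rewrite !mulrA ee.
  have se : (e*r*e)*e = e*r*e by rewrite -!mulrA ee.
  set t := e*r*e.
  rewrite -(mulrA h e t) es (mulrA t h e) -(hc' t) -(mulrA h t e) se.
  done.
have E1 x : e*x = x -> h*e*x = h*x by move=> ex; rewrite -mulrA ex.
have E2 x : e*x = x -> (e - h*e)*x = (1-h)*x.
  by move=> ex; rewrite !mulrBl -mulrA ex mul1r.
rewrite ehe E1 // E1 // E2 // E2 //.
split.
- apply: key => //.
  + by rewrite mulrA -hc' -mulrA ea.
  + by rewrite -mulrA ae.
  + by rewrite mulrA -hc' -mulrA eb.
  + by rewrite -mulrA be.
- apply: key => //.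
  + by rewrite mulrBl mul1r mulrBr eb mulrA -(hc' e) -mulrA eb.
  + by rewrite mulrBl mul1r mulrBl -mulrA be.
  + by rewrite mulrBl mul1r mulrBr ea mulrA -(hc' e) -mulrA ea.
  + by rewrite mulrBl mul1r mulrBl -mulrA ae.
Qed.
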